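(* Let $n\geq 1$. For a Tamari interval $[S,T]$ of size $n$, define $\psi([S,T])=(c_1,\dots,c_{n-1})$ by $c_i=r_S(i)-\ell_T(i+1)$ for $i\in[n-1]$, where $r_S(i)$ is the number of nodes in the right subtree of node $i$ of $S$ and $\ell_T(j)$ is the number of nodes in the left subtree of node $j$ of $T$. Then $\psi$ takes values in $\mathcal{CC}_n$ and is an isomorphism of posets from $(\mathcal{TI}_n,\leq_{\mathrm{ti}})$ to $(\mathcal{CC}_n,\leq_{\mathrm{cc}})$.
   Context: Binary trees with $n$ nodes have their nodes labeled $1,\dots,n$ in in-order (left subtree, root, right subtree). A right rotation replaces a subtree of the form $((A,x,B),y,C)$ by $(A,x,(B,y,C))$. The Tamari order: $S\leq_{\mathrm t}T$ iff $T$ is obtained from $S$ by a finite sequence of right rotations. $\mathcal{TI}_n$ is the set of Tamari intervals $[S,T]$, i.e. pairs of binary trees with $n$ nodes with $S\leq_{\mathrm t}T$, ordered by $[S,T]\leq_{\mathrm{ti}}[S',T']$ iff $S\leq_{\mathrm t}S'$ and $T\leq_{\mathrm t}T'$. A Tamari diagram of size $n$ is a word $u=u_1\cdots u_n$ of integers with $0\leq u_i\leq n-i$ and $u_{i+j}\leq u_i-j$ for all $i\in[n]$, $0\leq j\leq u_i$. A dual Tamari diagram of size $n$ is a word $v$ of integers with $0\leq v_i\leq i-1$ and $v_{i-j}\leq v_i-j$ for all $i\in[n]$, $0\leq j\leq v_i$. $(u,v)$ is a Tamari interval diagram if moreover for all $1\leq i<j\leq n$ with $j-i\leq u_i$ one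 has $v_j<j-i$. A cubic coordinate of size $n$ is $c\in\mathbb{Z}^{n-1}$ such that $(u,v)$ with $u_i=\max(c_i,0)$ ($i\in[n-1]$), $u_n=0$, $v_1=0$, $v_i=|\min(c_{i-1},0)|$ ($2\leq i\leq n$) is a Tamari interval diagram; $\mathcal{CC}_n$ is their set, ordered componentwise: $c\leq_{\mathrm{cc}}c'$ iff $c_i\leq c'_i$ for all $i$. (The map $\psi$ is the composite of the Châtel–Pons bijection from Tamari intervals to interval-posets with the bijections from interval-posets to Tamari interval diagrams to cubic coordinates.) *)

(* Defs.v *)
From mathcomp Require Import all_boot all_order all_algebra.
Set Implicit Arguments. Unset Strict Implicit. Unset Printing Implicit Defensive.
Import Order.TTheory GRing.Theory Num.Theory.

(* Binary trees; nodes are labeled 1..n in in-order. *)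
Inductive bt : Type := Leaf | Node of bt & bt.

Fixpoint bt_size (t : bt) : nat :=
  match t with Leaf => 0 | Node l r => (bt_size l + bt_size r).+1 end.

Inductive rrot : bt -> bt -> Prop :=
| rrot_root A B C : rrot (Node (Node A B) C) (Node A (Node B C))
| rrot_l l l' r : rrot l l' -> rrot (Node l r) (Node l' r)
| rrot_r l r r' : rrot r r' -> rrot (Node l r) (Node l r').

Inductive tamari_le : bt -> bt -> Prop :=
| tamari_refl S : tamari_le S S
| tamari_step S S' T : rrot S S' -> tamari_le S' T -> tamari_le S T.

Definition tamari_interval (n : nat) (S T : bt) : Prop :=
  bt_size S = n /\ bt_size T = n /\ tamari_le S T.

Definition ti_le (S T S' T' : bt) : Prop := tamari_le S S' /\ tamari_le T T'.

(* In-order list of sizes of right (resp. left) subtrees: the k-th entry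
   (0-indexed) corresponds to node k+1. *)
Fixpoint rsizes (t : bt) : seq nat :=
  match t with Leaf => [::] | Node l r => rsizes l ++ bt_size r :: rsizes r end.
Fixpoint lsizes (t : bt) : seq nat :=
  match t with Leaf => [::] | Node l r => lsizes l ++ bt_size l :: lsizes r end.

Definition r_sub (S : bt) (i : nat) : nat := nth 0 (rsizes S) i.-1.
Definition l_sub (T : bt) (j : nat) : nat := nth 0 (lsizes T) j.-1.

(* Words are indexed 1..n via functions nat -> nat. *)
Definition tamari_diagram (n : nat) (u : nat -> nat) : Prop :=
  forall i, 1 <= i <= n ->
    u i <= n - i /\ (forall j, j <= u i -> u (i + j) <= u i - j).

Definition dual_tamari_diagram (n : nat) (v : nat -> nat) : Prop :=
  forall i, 1 <= i <= n ->
    v i <= i - 1 /\ (forall j, j <= v i -> v (i - j) <= v i - j).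

Definition tamari_interval_diagram (n : nat) (u v : nat -> nat) : Prop :=
  [/\ tamari_diagram n u, dual_tamari_diagram n v &
      forall i j, 1 <= i -> i < j -> j <= n -> j - i <= u i -> v j < j - i].

Definition cc_at (c : seq int) (i : nat) : int := nth 0%R c i.-1.

Definition cc_u (n : nat) (c : seq int) (i : nat) : nat :=
  if (1 <= i) && (i <= n.-1) then `|Num.max (cc_at c i) 0%R|%N else 0.
Definition cc_v (n : nat) (c : seq int) (i : nat) : nat :=
  if (2 <= i) && (i <= n) then `|Num.min (cc_at c i.-1) 0%R|%N else 0.

Definition cubic_coord (n : nat) (c : seq int) : Prop :=
  size c = n.-1 /\ tamari_interval_diagram n (cc_u n c) (cc_v n c).

Definition cc_le (n : nat) (c c' : seq int) : Prop :=
  forall i, 1 <= i <= n.-1 -> (cc_at c i <= cc_at c' i)%R.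

Definition psi (n : nat) (S T : bt) : seq int :=
  mkseq (fun k => ((r_sub S k.+1)%:Z - (l_sub T k.+2)%:Z)%R) n.-1.

(* Main.v *)
Require Import Defs.
From mathcomp Require Import all_boot all_order all_algebra zify.
Import Order.TTheory GRing.Theory Num.Theory.

Set Warnings "-notation-overridden -ambiguous-paths".
Set Implicit Arguments. Unset Strict Implicit.

Notation R t i := (nth 0%N (rsizes t) i).
Notation L t i := (nth 0%N (lsizes t) i).

Lemma size_rsizes t : size (rsizes t) = bt_size t.
Proof. elim: t => //= l IHl r IHr; rewrite size_cat /= IHl IHr; lia. Qed.

Lemma size_lsizes t : size (lsizes t) = bt_size t.
Proof. elim: t => //= l IHl r IHr; rewrite size_cat /= IHl IHr; lia. Qed.

Lemma nth_rs l r i : R (Node l r) i =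
  if i < bt_size l then R l i else if i == bt_size l then bt_size r
  else R r (i - (bt_size l).+1).
Proof.
rewrite /= nth_cat size_rsizes; case: ltnP => // h.
case: eqP => [->|ne]; first by rewrite subnn.
have -> : i - bt_size l = (i - (bt_size l).+1).+1 by lia.
by [].
Qed.

Lemma nth_ls l r i : L (Node l r) i =
  if i < bt_size l then L l i else if i == bt_size l then bt_size l
  else L r (i - (bt_size l).+1).
Proof.
rewrite /= nth_cat size_lsizes; case: ltnP => // h.
case: eqP => [->|ne]; first by rewrite subnn.
have -> : i - bt_size l = (i - (bt_size l).+1).+1 by lia.
by [].
Qed.

Lemma bound_r t i : i < bt_size t -> R t i + i < bt_size t.
Proof.
elim: t i => //= l IHl r IHr i hi; rewrite -/(R (Node l r) i) nth_rs.
case: (ltnP i (bt_size l)) => h1; first by have := IHl i h1; lia.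
case: (eqVneq i (bt_size l)) => h2; first lia.
have := IHr (i - (bt_size l).+1); lia.
Qed.

Lemma bound_l t i : L t i <= i.
Proof.
elim: t i => [i|l IHl r IHr i]; first by rewrite nth_nil.
rewrite nth_ls; case: (ltnP i (bt_size l)) => h1; first exact: IHl.
case: (eqVneq i (bt_size l)) => h2; first lia.
have := IHr (i - (bt_size l).+1); lia.
Qed.

Definition sle (s t : seq nat) := size s = size t /\ forall i, nth 0 s i <= nth 0 t i.

Lemma sle_refl s : sle s s.
Proof. by split. Qed.

Lemma sle_trans s t u : sle s t -> sle t u -> sle s u.
Proof. move=> [h1 h2] [h3 h4]; split; first by rewrite h1. move=> i; exact: leq_trans (h2 i) (h4 i). Qed.

Lemma sle_cat a a' b b' : sle a a' -> sle b b' -> sle (a ++ b) (a' ++ b').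
Proof.
move=> [h1 h2] [h3 h4]; split; first by rewrite !size_cat h1 h3.
move=> i; rewrite !nth_cat h1; case: ifP => _; [exact: h2 | exact: h4].
Qed.

Lemma sle_cons x y s t : x <= y -> sle s t -> sle (x :: s) (y :: t).
Proof. move=> hx [h1 h2]; split; first by rewrite /= h1. by case. Qed.

Lemma sle_take k s t : sle s t -> sle (take k s) (take k t).
Proof. move=> [h1 h2]; split; first by rewrite !size_take h1. move=> i; case: (ltnP i k) => hi; first by rewrite !nth_take.
by rewrite !nth_default // size_take; case: ltnP => //; lia. Qed.

Lemma sle_drop k s t : sle s t -> sle (drop k s) (drop k t).
Proof. move=> [h1 h2]; split; first by rewrite !size_drop h1. move=> i; rewrite !nth_drop. exact: h2. Qed.

Lemma sle_rev s t : sle s t -> sle (rev s) (rev t).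
Proof.
move=> [h1 h2]; split; first by rewrite !size_rev h1.
move=> i; case: (ltnP i (size s)) => hi.
  rewrite !nth_rev -?h1 //; exact: h2.
by rewrite !nth_default ?size_rev -?h1.
Qed.

Lemma rrot_size S S' : rrot S S' -> bt_size S = bt_size S'.
Proof. elim=> //= *; lia. Qed.

Lemma rrot_sle S S' : rrot S S' -> sle (rsizes S) (rsizes S').
Proof.
elim=> /= [A B C|l l' r h IH|l r r' h IH].
- rewrite -catA /=; apply: sle_cat; first exact: sle_refl.
  apply: sle_cons; first lia. exact: sle_refl.
- apply: sle_cat => //; exact: sle_refl.
- apply: sle_cat; first exact: sle_refl. rewrite (rrot_size h); exact: sle_cons.
Qed.

Lemma tamari_trans S T U : tamari_le S T -> tamari_le T U -> tamari_le S U.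
Proof. elim=> // {}S S' {}T h _ IH hU; apply: tamari_step h (IH hU). Qed.

Lemma tamari_one S T : rrot S T -> tamari_le S T.
Proof. move=> h; apply: tamari_step h (tamari_refl _). Qed.

Lemma tamari_size S T : tamari_le S T -> bt_size S = bt_size T.
Proof. elim=> // {}S S' {}T h _ <-; exact: rrot_size. Qed.

Lemma tamari_sle S T : tamari_le S T -> sle (rsizes S) (rsizes T).
Proof. elim=> [S0|{}S S' {}T h _ IH]; first exact: sle_refl. exact: sle_trans (rrot_sle h) IH. Qed.

Lemma tamari_congl l l' r : tamari_le l l' -> tamari_le (Node l r) (Node l' r).
Proof. elim=> [x|x x' y h _ IH]; first exact: tamari_refl. exact: tamari_step (rrot_l _ h) IH. Qed.

Lemma tamari_congr l r r' : tamari_le r r' -> tamari_le (Node l r) (Node l r').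
Proof. elim=> [x|x x' y h _ IH]; first exact: tamari_refl. exact: tamari_step (rrot_r _ h) IH. Qed.

Lemma tamari_cong l l' r r' : tamari_le l l' -> tamari_le r r' -> tamari_le (Node l r) (Node l' r').
Proof. move=> h1 h2; exact: tamari_trans (tamari_congl _ h1) (tamari_congr _ h2). Qed.

Lemma split_lemma S k : k < bt_size S -> (forall i, i < k -> R S i + i < k) ->
  exists A B, [/\ bt_size A = k, tamari_le S (Node A B), rsizes A = take k (rsizes S)
     & rsizes B = drop k.+1 (rsizes S)].
Proof.
elim: S k => //= l IHl r _ k hk hi.
have hrs : rsizes (Node l r) = rsizes l ++ bt_size r :: rsizes r by [].
case: (ltngtP k (bt_size l)) => hkl.
- have hi' : forall i, i < k -> R l i + i < k.
    move=> i ik; have := hi i ik; rewrite -/(R (Node l r) i) nth_rs ifT //; lia.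
  have [A [B [h1 h2 h3 h4]]] := IHl k hkl hi'.
  exists A, (Node B r); split => //.
  + apply: tamari_trans (tamari_congl _ h2) (tamari_one (rrot_root _ _ _)).
  + by rewrite h3 take_cat size_rsizes hkl.
  + rewrite /= h4 drop_cat size_rsizes; case: ltnP => h5 //.
    have -> : k.+1 - bt_size l = 0 by lia.
    by rewrite drop0 drop_oversize // size_rsizes.
- have := hi (bt_size l) hkl; rewrite -/(R (Node l r) _) nth_rs ltnn eqxx; lia.
- exists l, r; split => //; first exact: tamari_refl.
  + by rewrite hkl take_cat size_rsizes ltnn subnn take0 cats0.
  + by rewrite hkl drop_cat size_rsizes ltnNge leqnSn /= subSnn /= drop0.
Qed.

Lemma sle_tamari T S : sle (rsizes S) (rsizes T) -> tamari_le S T.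
Proof.
elim: T S => [|TL IHL TR IHR] S [hs hle].
  rewrite size_rsizes /= in hs; case: S hs {hle} => [|l r] // _; exact: tamari_refl.
rewrite !size_rsizes in hs.
have hk : bt_size TL < bt_size S by rewrite hs /=; lia.
have hi : forall i, i < bt_size TL -> R S i + i < bt_size TL.
  move=> i ik; have := hle i; rewrite -/(R (Node TL TR) i) nth_rs ik.
  have := bound_r ik; lia.
have [A [B [h1 h2 h3 h4]]] := split_lemma hk hi.
apply: tamari_trans h2 _; apply: tamari_cong.
- apply: IHL; rewrite h3.
  have -> : rsizes TL = take (bt_size TL) (rsizes (Node TL TR)).
    by rewrite /= take_cat size_rsizes ltnn subnn take0 cats0.
  apply: sle_take; split => //; by rewrite !size_rsizes.
- apply: IHR; rewrite h4.
  have -> : rsizes TR = drop (bt_size TL).+1 (rsizes (Node TL TR)).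
    by rewrite /= drop_cat size_rsizes ltnNge leqnSn /= subSnn /= drop0.
  apply: sle_drop; split => //; by rewrite !size_rsizes.
Qed.

Lemma tamari_iff S T : tamari_le S T <-> sle (rsizes S) (rsizes T).
Proof. split; [exact: tamari_sle | exact: sle_tamari]. Qed.

Lemma rsizes_inj S T : rsizes S = rsizes T -> S = T.
Proof.
elim: S T => [|l IHl r IHr] [|l' r'] //=.
- by move/(f_equal size); rewrite size_cat /= addnS.
- by move/(f_equal size); rewrite size_cat /= addnS.
move=> e.
have hsz : bt_size (Node l r) = bt_size (Node l' r') by rewrite -!size_rsizes /= e.
have hp : bt_size l = bt_size l'.
  case: (ltngtP (bt_size l) (bt_size l')) => // h.
  - have := f_equal (nth 0 ^~ (bt_size l)) e.
    rewrite -/(R (Node l r) _) -/(R (Node l' r') _) !nth_rs ltnn eqxx h.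
    have := bound_r h. move: hsz => /=; lia.
  - have := f_equal (nth 0 ^~ (bt_size l')) e.
    rewrite -/(R (Node l r) _) -/(R (Node l' r') _) !nth_rs ltnn eqxx h.
    have := bound_r h. move: hsz => /=; lia.
move/eqP: e; rewrite eqseq_cat ?size_rsizes // => /andP [/eqP e1 /eqP [e2 e3]].
by rewrite (IHl _ e1) (IHr _ e3).
Qed.

Definition tdiag (s : seq nat) := forall i, i < size s ->
  nth 0 s i + i < size s /\ forall j, j <= nth 0 s i -> nth 0 s (i + j) + j <= nth 0 s i.
Definition dtdiag (s : seq nat) := forall i, i < size s ->
  nth 0 s i <= i /\ forall j, j <= nth 0 s i -> nth 0 s (i - j) + j <= nth 0 s i.

Lemma tdiag_rs t : tdiag (rsizes t).
Proof.
elim: t => [|l IHl r IHr] i; rewrite size_rsizes //= => hi.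
split; first by have := @bound_r (Node l r) i hi.
move=> j hj; move: hj; rewrite -!/(R (Node l r) _) !nth_rs.
case: (ltnP i (bt_size l)) => h1.
  move=> hj; have := bound_r h1 => hb.
  rewrite ifT; last lia.
  have [_ H] := IHl i ltac:(by rewrite size_rsizes); exact: H.
case: (eqVneq i (bt_size l)) => h2.
  move=> hj; rewrite h2 in hj *.
  case: (posnP j) => hj0; first by move: hj0 => ->; rewrite !addn0 ltnn eqxx.
  rewrite ifF; last lia. rewrite ifF; last lia.
  have hh : bt_size l + j - (bt_size l).+1 < bt_size r by lia.
  have := bound_r hh; lia.
move=> hj; rewrite ifF; last lia. rewrite ifF; last lia.
have hi' : i - (bt_size l).+1 < size (rsizes r) by rewrite size_rsizes; lia.
have [_ H] := IHr _ hi'.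
have := H j hj.
have -> : i + j - (bt_size l).+1 = i - (bt_size l).+1 + j by lia.
by [].
Qed.

Lemma tdiag_surj_aux N s : size s <= N -> tdiag s -> exists t, rsizes t = s.
Proof.
elim: N s => [|N IH] s hN hs.
  by exists Leaf; case: s hN {hs}.
case: (posnP (size s)) => hs0.
  by exists Leaf; case: s hs0 {hN hs}.
set n := size s in hs0 *.
have exP : exists i, (nth 0 s i + i).+1 == n.
  exists n.-1; apply/eqP; have [h _] := hs n.-1 ltac:(lia); lia.
case: (ex_minnP exP) => k /eqP hk hmin.
have kn : k < n by lia.
have hlt : forall i, i < k -> nth 0 s i + i < k.
  move=> i ik; have [b H] := hs i ltac:(lia).
  case: (ltnP (nth 0 s i + i) k) => // hc.
  have := H (k - i) ltac:(lia).
  have -> : i + (k - i) = k by lia.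
  move=> hh; have := hmin i; have -> : (nth 0 s i + i).+1 == n by apply/eqP; lia.
  move=> /(_ isT); lia.
have hA : tdiag (take k s).
  move=> i; rewrite size_take kn => ik; rewrite nth_take //.
  split; first exact: hlt.
  move=> j hj; have := hlt i ik => hb; rewrite nth_take; last lia.
  have [_ H] := hs i ltac:(lia); exact: H.
have hB : tdiag (drop k.+1 s).
  move=> i; rewrite size_drop => ik; rewrite !nth_drop.
  have [b H] := hs (k.+1 + i) ltac:(lia).
  split; first lia.
  move=> j hj; have := H j hj; by rewrite nth_drop addnA.
have [A hA'] := IH (take k s) ltac:(by rewrite size_take kn; lia) hA.
have [B hB'] := IH (drop k.+1 s) ltac:(by rewrite size_drop; lia) hB.
exists (Node A B) => /=.
rewrite hA' hB'.
have -> : bt_size B = nth 0 s k.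
  by rewrite -size_rsizes hB' size_drop; lia.
by rewrite -drop_nth // cat_take_drop.
Qed.

Lemma tdiag_surj s : tdiag s -> exists t, rsizes t = s.
Proof. exact: (@tdiag_surj_aux (size s)). Qed.

Fixpoint mirror (t : bt) : bt :=
  match t with Leaf => Leaf | Node l r => Node (mirror r) (mirror l) end.

Lemma mirrorK t : mirror (mirror t) = t.
Proof. by elim: t => //= l -> r ->. Qed.

Lemma size_mirror t : bt_size (mirror t) = bt_size t.
Proof. elim: t => //= l -> r ->; lia. Qed.

Lemma lsizes_mirror t : lsizes t = rev (rsizes (mirror t)).
Proof.
elim: t => //= l IHl r IHr.
by rewrite rev_cat rev_cons IHl IHr cat_rcons size_mirror.
Qed.

Lemma rrot_mirror S T : rrot S T -> rrot (mirror T) (mirror S).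
Proof.
elim=> /= [A B C|l l' r _ IH|l r r' _ IH]; first exact: rrot_root.
- exact: rrot_r.
- exact: rrot_l.
Qed.

Lemma tamari_mirror S T : tamari_le S T -> tamari_le (mirror T) (mirror S).
Proof.
elim=> [x|x x' y h _ IH]; first exact: tamari_refl.
exact: tamari_trans IH (tamari_one (rrot_mirror h)).
Qed.

Lemma tamari_iff_l T T' : tamari_le T T' <-> sle (lsizes T') (lsizes T).
Proof.
rewrite !lsizes_mirror; split.
  by move/tamari_mirror/tamari_sle/sle_rev.
move/sle_rev; rewrite !revK => /sle_tamari/tamari_mirror; by rewrite !mirrorK.
Qed.

Lemma lsizes_inj T T' : lsizes T = lsizes T' -> T = T'.
Proof.
rewrite !lsizes_mirror => /(f_equal rev); rewrite !revK => /rsizes_inj.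
by move/(f_equal mirror); rewrite !mirrorK.
Qed.

Lemma dtdiag_rev s : dtdiag s -> tdiag (rev s).
Proof.
move=> h i; rewrite size_rev => hi; rewrite nth_rev //.
have [h1 h2] := h (size s - i.+1) ltac:(lia).
split; first lia.
move=> j hj; rewrite nth_rev; last lia.
have := h2 j hj.
have -> : size s - (i + j).+1 = size s - i.+1 - j by lia.
done.
Qed.

Lemma tdiag_rev s : tdiag s -> dtdiag (rev s).
Proof.
move=> h i; rewrite size_rev => hi; rewrite nth_rev //.
have [h1 h2] := h (size s - i.+1) ltac:(lia).
split; first lia.
move=> j hj; rewrite nth_rev; last lia.
have := h2 j hj.
have -> : size s - (i - j).+1 = size s - i.+1 + j by lia.
done.
Qed.

Lemma dtdiag_ls t : dtdiag (lsizes t).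
Proof. rewrite lsizes_mirror; apply: tdiag_rev; exact: tdiag_rs. Qed.

Lemma dtdiag_surj s : dtdiag s -> exists t, lsizes t = s.
Proof.
move/dtdiag_rev/tdiag_surj => [t ht]; exists (mirror t).
by rewrite lsizes_mirror mirrorK ht revK.
Qed.

Lemma key t i j : i < j -> j < bt_size t ->
  (j - i <= R t i <-> forall m, i < m -> m <= j -> L t m < m - i).
Proof.
elim: t i j => [|l IHl r IHr] i j hij hj //=.
rewrite -/(R (Node l r) i) nth_rs.
move: hj => /= hj.
have hls : forall m, L (Node l r) m = _ := nth_ls l r.
case: (ltnP j (bt_size l)) => hjp.
  rewrite ifT; last lia.
  rewrite (IHl i j hij hjp).
  split=> H m h1 h2; have := H m h1 h2; rewrite hls ifT //; lia.
case: (ltnP i (bt_size l)) => hip.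
  split.
    move=> H; have := bound_r hip; lia.
  move=> /(_ (bt_size l) hip hjp); rewrite hls ltnn eqxx; lia.
case: (eqVneq i (bt_size l)) => hip2.
  rewrite hip2; split; last by move=> _; lia.
  move=> _ m h1 h2; rewrite hls ifF; last lia. rewrite ifF; last lia.
  have := bound_l r (m - (bt_size l).+1); lia.
have hr : j - (bt_size l).+1 < bt_size r by move: hj => /=; lia.
have := IHr (i - (bt_size l).+1) (j - (bt_size l).+1) ltac:(lia) hr.
have -> : j - (bt_size l).+1 - (i - (bt_size l).+1) = j - i by lia.
move=> ->; split.
  move=> H m h1 h2; rewrite hls ifF; last lia. rewrite ifF; last lia.
  have := H (m - (bt_size l).+1) ltac:(lia) ltac:(lia); lia.
move=> H m h1 h2; have := H (m + (bt_size l).+1) ltac:(lia) ltac:(lia).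
rewrite hls ifF; last lia. rewrite ifF; last lia.
have -> : m + (bt_size l).+1 - (bt_size l).+1 = m by lia.
lia.
Qed.

Lemma interval_fwd S T i j : sle (rsizes S) (rsizes T) -> i < j -> j < bt_size T ->
  j - i <= R S i -> L T j < j - i.
Proof.
move=> [_ h] hij hj hr.
have : j - i <= R T i by apply: leq_trans hr (h i).
move/(key hij hj) => H; exact: H j hij (leqnn j).
Qed.

Lemma interval_bwd S T : bt_size S = bt_size T ->
  (forall i j, i < j -> j < bt_size T -> j - i <= R S i -> L T j < j - i) ->
  sle (rsizes S) (rsizes T).
Proof.
move=> hs H; split; first by rewrite !size_rsizes.
move=> i; case: (ltnP i (bt_size S)) => hi; last by rewrite nth_default // size_rsizes.
case: (posnP (R S i)) => h0; first by rewrite h0.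
have hb := bound_r hi.
have hij : i < i + R S i by lia.
have hj : i + R S i < bt_size T by lia.
have := proj2 (key hij hj).
have -> : i + R S i - i = R S i by lia.
apply=> m h1 h2; apply: H => //; lia.
Qed.

Lemma disj S T k : tamari_le S T -> k.+1 < bt_size T -> R S k = 0 \/ L T k.+1 = 0.
Proof.
move=> hST hk; case: (posnP (R S k)) => h; [by left | right].
have [_ hle] := tamari_sle hST.
have hk1 : k < k.+1 by [].
have h' : k.+1 - k <= R S k by rewrite subSnn.
have := proj1 (key hk1 hk) (leq_trans h' (hle k)).
move=> /(_ k.+1 hk1 (leqnn _)); lia.
Qed.

Lemma int_max (a b : nat) : (a = 0 \/ b = 0) -> `|Num.max (a%:Z - b%:Z)%R 0%R|%N = a.
Proof. lia. Qed.
Lemma int_min (a b : nat) : (a = 0 \/ b = 0) -> `|Num.min (a%:Z - b%:Z)%R 0%R|%N = b.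
Proof. lia. Qed.
Lemma int_le (a b a' b': nat) : (a = 0 \/ b = 0) -> (a' = 0 \/ b' = 0) ->
  ((a%:Z - b%:Z <= a'%:Z - b'%:Z)%R <-> (a <= a' /\ b' <= b)).
Proof. lia. Qed.
Lemma int_eq (a b a' b': nat) : (a = 0 \/ b = 0) -> (a' = 0 \/ b' = 0) ->
  (a%:Z - b%:Z = a'%:Z - b'%:Z)%R -> a = a' /\ b = b'.
Proof. lia. Qed.
Lemma int_dec (c : int) : c = ((`|Num.max c 0%R|%N)%:Z - (`|Num.min c 0%R|%N)%:Z)%R.
Proof. lia. Qed.

Lemma nth_psi n S T k : k < n.-1 ->
  nth 0%R (psi n S T) k = ((R S k)%:Z - (L T k.+1)%:Z)%R.
Proof. by move=> hk; rewrite /psi nth_mkseq. Qed.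

Lemma U_lem n S T i : tamari_interval n S T -> 1 <= i <= n ->
  cc_u n (psi n S T) i = R S i.-1.
Proof.
move=> [hS [hT hST]] /andP [h1 h2]; rewrite /cc_u h1 /=.
case: (leqP i n.-1) => h3.
  rewrite /cc_at nth_psi; last lia.
  apply: int_max; apply: disj hST _; rewrite hT; lia.
have hb := @bound_r S i.-1 ltac:(rewrite hS; lia); lia.
Qed.

Lemma V_lem n S T i : tamari_interval n S T -> 1 <= i <= n ->
  cc_v n (psi n S T) i = L T i.-1.
Proof.
move=> [hS [hT hST]] /andP [h1 h2]; rewrite /cc_v h2 andbT.
case: (leqP 2 i) => h3.
  rewrite /cc_at nth_psi; last lia.
  have -> : i.-1 = i.-1.-1.+1 by lia.
  apply: int_min; apply: disj hST _; rewrite hT; lia.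
have -> : i = 1 by lia.
by have := bound_l T 0; rewrite /=; lia.
Qed.

Lemma R_tail S k : bt_size S <= k.+1 -> R S k = 0.
Proof.
move=> h; case: (ltnP k (bt_size S)) => h2; first by have := bound_r h2; lia.
by rewrite nth_default // size_rsizes.
Qed.

Lemma L_tail T k : bt_size T <= k -> L T k = 0.
Proof. by move=> h; rewrite nth_default // size_lsizes. Qed.

Lemma L_head T : L T 0 = 0.
Proof. by have := bound_l T 0; lia. Qed.

Lemma part1 n S T : 1 <= n -> tamari_interval n S T -> cubic_coord n (psi n S T).
Proof.
move=> hn hI; have [hS [hT hST]] := hI.
split; first by rewrite size_mkseq.
split.
- move=> i /andP [h1 h2].
  rewrite (U_lem hI); last by rewrite h1 h2.
  have hb := @bound_r S i.-1 ltac:(rewrite hS; lia).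
  split; first lia.
  move=> j hj; have [_ H] := @tdiag_rs S (i.-1) ltac:(rewrite size_rsizes hS; lia).
  rewrite (U_lem hI); last by apply/andP; split; lia.
  have := H j hj; have -> : i.-1 + j = (i + j).-1 by lia.
  lia.
- move=> i /andP [h1 h2].
  rewrite (V_lem hI); last by rewrite h1 h2.
  have hb := bound_l T i.-1.
  split; first lia.
  move=> j hj; have [_ H] := @dtdiag_ls T (i.-1) ltac:(rewrite size_lsizes hT; lia).
  rewrite (V_lem hI); last by apply/andP; split; lia.
  have := H j hj; have -> : i.-1 - j = (i - j).-1 by lia.
  lia.
- move=> i j h1 h2 h3.
  rewrite (U_lem hI); last by apply/andP; split; lia.
  rewrite (V_lem hI); last by apply/andP; split; lia.
  move=> hu.
  have := @interval_fwd S T i.-1 j.-1 (tamari_sle hST) ltac:(lia) ltac:(rewrite hT; lia) ltac:(lia).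
  lia.
Qed.

Lemma part2 n S T S' T' : 1 <= n -> tamari_interval n S T -> tamari_interval n S' T' ->
  psi n S T = psi n S' T' -> S = S' /\ T = T'.
Proof.
move=> hn [hS [hT hST]] [hS' [hT' hST']] e.
have K : forall k, k < n.-1 -> R S k = R S' k /\ L T k.+1 = L T' k.+1.
  move=> k hk; have := f_equal (nth 0%R ^~ k) e; rewrite !nth_psi //.
  apply: int_eq.
  - apply: disj hST _; rewrite hT; lia.
  - apply: disj hST' _; rewrite hT'; lia.
split.
- apply: rsizes_inj; apply: (@eq_from_nth _ 0); first by rewrite !size_rsizes hS hS'.
  move=> k; rewrite size_rsizes hS => hk.
  case: (ltnP k n.-1) => h; first exact: (proj1 (K k h)).
  by rewrite !R_tail ?hS ?hS' //; lia.
- apply: lsizes_inj; apply: (@eq_from_nth _ 0); first by rewrite !size_lsizes hT hT'.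
  move=> [_|k]; first by rewrite !L_head.
  rewrite size_lsizes hT => hk; exact: (proj2 (K k ltac:(lia))).
Qed.

Lemma part3 n c : 1 <= n -> cubic_coord n c ->
  exists S T, tamari_interval n S T /\ psi n S T = c.
Proof.
move=> hn [hsz [hu hv hint]].
set su := mkseq (fun k => cc_u n c k.+1) n.
set sv := mkseq (fun k => cc_v n c k.+1) n.
have tu : tdiag su.
  move=> i; rewrite size_mkseq => hi; rewrite nth_mkseq //.
  have [a b] := hu i.+1 ltac:(lia).
  split; first lia.
  move=> j hj; rewrite nth_mkseq; last lia.
  have := b j hj; have -> : (i + j).+1 = i.+1 + j by lia.
  lia.
have tv : dtdiag sv.
  move=> i; rewrite size_mkseq => hi; rewrite nth_mkseq //.
  have [a b] := hv i.+1 ltac:(lia).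
  split; first lia.
  move=> j hj; rewrite nth_mkseq; last lia.
  have := b j hj; have -> : (i - j).+1 = i.+1 - j by lia.
  lia.
have [S hS] := tdiag_surj tu.
have [T hT] := dtdiag_surj tv.
have sS : bt_size S = n by rewrite -size_rsizes hS size_mkseq.
have sT : bt_size T = n by rewrite -size_lsizes hT size_mkseq.
exists S, T; split.
  split=> //; split=> //.
  apply: sle_tamari; apply: interval_bwd; first by rewrite sS sT.
  move=> i j hij hj; rewrite hS hT.
  rewrite sT in hj; rewrite !nth_mkseq //; last lia.
  move=> h; have := hint i.+1 j.+1 ltac:(lia) ltac:(lia) ltac:(lia) ltac:(lia); lia.
apply: (@eq_from_nth _ 0%R); first by rewrite size_mkseq hsz.
move=> k; rewrite size_mkseq => hk; rewrite nth_psi // hS hT !nth_mkseq; try lia.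
rewrite /cc_u /cc_v.
have -> : (1 <= k.+1) && (k.+1 <= n.-1) by apply/andP; split; lia.
have -> : (2 <= k.+2) && (k.+2 <= n) by apply/andP; split; lia.
rewrite /= -int_dec /cc_at //.
Qed.

Lemma pt_le n S T S' T' k : tamari_interval n S T -> tamari_interval n S' T' -> k < n.-1 ->
  ((cc_at (psi n S T) k.+1 <= cc_at (psi n S' T') k.+1)%R <->
   (R S k <= R S' k /\ L T' k.+1 <= L T k.+1)).
Proof.
move=> [hS [hT hST]] [hS' [hT' hST']] hk.
rewrite /cc_at /= !nth_psi //; apply: int_le.
- apply: disj hST _; rewrite hT; lia.
- apply: disj hST' _; rewrite hT'; lia.
Qed.

Lemma part4 n S T S' T' : 1 <= n -> tamari_interval n S T -> tamari_interval n S' T' ->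
  (ti_le S T S' T' <-> cc_le n (psi n S T) (psi n S' T')).
Proof.
move=> hn hI hI'; have [hS [hT _]] := hI; have [hS' [hT' _]] := hI'.
rewrite /ti_le tamari_iff tamari_iff_l; split.
- move=> [[_ h1] [_ h2]] i /andP [i1 i2].
  have -> : i = i.-1.+1 by lia.
  apply/(pt_le hI hI'); first lia.
  by split; [apply: h1 | apply: h2].
- move=> h; split.
  + split; first by rewrite !size_rsizes hS hS'.
    move=> k; case: (ltnP k n.-1) => hk.
      have := h k.+1 ltac:(apply/andP; split; lia).
      by move/(pt_le hI hI' hk) => [].
    by rewrite R_tail // hS; lia.
  + split; first by rewrite !size_lsizes hT hT'.
    case=> [|k]; first by rewrite L_head.
    case: (ltnP k n.-1) => hk.
      have := h k.+1 ltac:(apply/andP; split; lia).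
      by move/(pt_le hI hI' hk) => [].
    by rewrite (@L_tail T') // hT'; lia.
Qed.

Theorem theorem3p2 (n : nat) (hn : 1 <= n) :
  (* psi takes values in CC_n *)
  (forall S T, tamari_interval n S T -> cubic_coord n (psi n S T)) /\
  (* psi is injective on TI_n *)
  (forall S T S' T', tamari_interval n S T -> tamari_interval n S' T' ->
     psi n S T = psi n S' T' -> S = S' /\ T = T') /\
  (* psi is surjective onto CC_n *)
  (forall c, cubic_coord n c ->
     exists S T, tamari_interval n S T /\ psi n S T = c) /\
  (* psi preserves and reflects the order *)
  (forall S T S' T', tamari_interval n S T -> tamari_interval n S' T' ->
     (ti_le S T S' T' <-> cc_le n (psi n S T) (psi n S' T'))).
Proof.
split; first by move=> S T; exact: part1.
split; first by move=> S T S' T'; exact: part2.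
split; first by move=> c; exact: part3.
by move=> S T S' T'; exact: part4.
Qed.
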